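(* Let $\mathcal{D} = \{(1,2),(3,2),(3,4),(5,4),(5,1)\}$ and $\epsilon\ge 0$. Let $\mu$ be a probability measure on a measurable space $\Lambda$ of hidden variables. Suppose that for each $h\in\Lambda$ we are given numbers $p_i(h)\in[0,1]$ for $i\in\{1,\dots,5\}$ and $q_{(i,j)}(h)\in[0,1]$ for $(i,j)\in\mathcal{D}$, measurable in $h$, with the following interpretation: $p_i(h)=\Pr(A_i=1\mid \#1=i,h)$ is the probability that measurement $i$, when performed first, yields outcome $+1$, and $q_{(i,j)}(h)=\Pr(A_j=1\mid \#1=i,\#2=j,h)$ is the probability that measurement $j$, performed second after $i$, yields $+1$ (outcomes are $\pm1$). Assume sequentiality: for each $h$ and $(i,j)\in\mathcal{D}$, $\Pr(A_i=a_i,A_j=a_j\mid \#1=i,\#2=j,h)=\Pr(A_i=a_i\mid\#1=i,h)\Pr(A_j=a_j\mid\#1=i,\#2=j,h)$. Assume bounded incompatibility: there are measurable $\epsilon_{(i,j),h}\in[0,1]$ with $|\Pr(A_j=a\mid \#1=j,h)-\Pr(A_j=a\mid\#1=i,\#2=j,h)|\le \epsilon_{(i,j),h}$ for all $h$, $(i,j)\in\mathcal{D}$, $a\in\{\pm1\}$, and $\frac15\int \mathrm{d}\mu(h)\sum_{(i,j)\in\mathcal{D}}\epsilon_{(i,j),h}\le\epsilon$. Consider the game in which an ordered context $(i,j)\in\mathcal{D}$ is selected uniformly at random (probability $1/5$ each, independently of $h$), $i$ is measured first and $j$ second, and the game is won iff the two outcomes differ. Then the winning probability $$\beta_{\mathrm{win}}=\frac15\int\mathrm{d}\mu(h)\sum_{(i,j)\in\mathcal{D}}\sum_{a\in\{-1,1\}}\Pr(A_i=a,A_j=-a\mid\#1=i,\#2=j,h)$$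 satisfies $\beta_{\mathrm{win}}\le \frac45+\epsilon$.
   Context: This is the single-trial winning probability of an $\epsilon$-bounded noncontextual hidden variable model in the KCBS win/lose game (five $\pm1$-valued measurements arranged in a pentagon, ordered contexts in $\mathcal{D}$). $\Pr(A_j=a\mid\#1=j,h)$ denotes the probability of outcome $a$ when $j$ is measured first (so $\Pr(A_j=1\mid\#1=j,h)=p_j(h)$). *)

(* Defs.v *)
From HB Require Import structures.
From mathcomp Require Import all_boot all_order all_algebra.
From mathcomp Require Import all_classical all_reals all_analysis.
Set Implicit Arguments. Unset Strict Implicit. Unset Printing Implicit Defensive.
Import Order.TTheory GRing.Theory Num.Theory.
Local Open Scope ring_scope.

(* Measurements 1..5 are represented by 'I_5 with value k-1 (0-indexed).
   Outcomes +1 / -1 are represented by true / false. *)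

Definition ctxD : seq ('I_5 * 'I_5) :=
  [:: (inord 0, inord 1); (inord 2, inord 1); (inord 2, inord 3);
      (inord 4, inord 3); (inord 4, inord 0)].

Definition prob_of {R : ringType} (p : R) (a : bool) : R :=
  if a then p else 1 - p.

(* Main.v *)
Require Import Defs.
From HB Require Import structures.
From mathcomp Require Import all_boot all_order all_algebra.
From mathcomp Require Import all_classical all_reals all_analysis.
From mathcomp Require Import measurable_realfun lra ring.
Import Order.TTheory GRing.Theory Num.Theory.
Local Open Scope ring_scope.

Section Aux.
Variable R : realFieldType.
Definition Fcyc (a b c d e : R) :=
  a + b - 2*a*b + (c + b - 2*c*b) + (c+d-2*c*d) + (e+d-2*e*d) + (e+a-2*e*a).
Lemma step_aff (x u v : R): 0<=x<=1 -> u<=4 -> v<=4 -> (1-x)*u + x*v <= 4.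
Proof. move=> /andP[? ?] ? ?; nra. Qed.
Lemma cyc_bound (a b c d e : R) :
  0 <= a <= 1 -> 0 <= b <= 1 -> 0 <= c <= 1 -> 0 <= d <= 1 -> 0 <= e <= 1 ->
  Fcyc a b c d e <= 4.
Proof.
move=> Ha Hb Hc Hd He.
have -> : Fcyc a b c d e = (1-a) * Fcyc 0 b c d e + a * Fcyc 1 b c d e by rewrite /Fcyc; ring.
apply: step_aff => //;
(have -> : forall x, Fcyc x b c d e = (1-b) * Fcyc x 0 c d e + b * Fcyc x 1 c d e by move=> x; rewrite /Fcyc; ring);
apply: step_aff => //;
(have -> : forall x y, Fcyc x y c d e = (1-c) * Fcyc x y 0 d e + c * Fcyc x y 1 d e by move=> x y; rewrite /Fcyc; ring);
apply: step_aff => //;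
(have -> : forall x y z, Fcyc x y z d e = (1-d) * Fcyc x y z 0 e + d * Fcyc x y z 1 e by move=> x y z; rewrite /Fcyc; ring);
apply: step_aff => //;
(have -> : forall x y z w, Fcyc x y z w e = (1-e) * Fcyc x y z w 0 + e * Fcyc x y z w 1 by move=> x y z w; rewrite /Fcyc; ring);
apply: step_aff => //; rewrite /Fcyc; lra.
Qed.

Lemma ctx_bound (pi pj q ee : R) : 0 <= pi <= 1 -> 0 <= pj <= 1 -> 0 <= q <= 1 ->
  `|pj - q| <= ee ->
  pi * (1 - q) + (1 - pi) * q <= pi + pj - 2 * pi * pj + ee.
Proof.
move=> /andP[? ?] /andP[? ?] /andP[? ?] /ler_normlP [h1 h2]; nra.
Qed.
End Aux.

Theorem mainTheorem1 (R : realType) (d : measure_display) (Lambda : measurableType d)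
  (mu : probability Lambda R) (eps : R)
  (* p i h = Pr(A_i = +1 | #1 = i, h) *)
  (p : 'I_5 -> Lambda -> R)
  (* q (i,j) h = Pr(A_j = +1 | #1 = i, #2 = j, h) *)
  (q : 'I_5 * 'I_5 -> Lambda -> R)
  (* J (i,j) a b h = Pr(A_i = a, A_j = b | #1 = i, #2 = j, h) *)
  (J : 'I_5 * 'I_5 -> bool -> bool -> Lambda -> R)
  (* epsilon_{(i,j),h} *)
  (e : 'I_5 * 'I_5 -> Lambda -> R) :
  0 <= eps ->
  (forall i h, 0 <= p i h <= 1) ->
  (forall c h, c \in ctxD -> 0 <= q c h <= 1) ->
  (forall i, measurable_fun setT (p i)) ->
  (forall c, c \in ctxD -> measurable_fun setT (q c)) ->
  (* sequentiality *)
  (forall c h a b, c \in ctxD ->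
     J c a b h = prob_of (p c.1 h) a * prob_of (q c h) b) ->
  (* bounded incompatibility *)
  (forall c h, c \in ctxD -> 0 <= e c h <= 1) ->
  (forall c, c \in ctxD -> measurable_fun setT (e c)) ->
  (forall c h a, c \in ctxD ->
     `| prob_of (p c.2 h) a - prob_of (q c h) a | <= e c h) ->
  ((1 / 5)%:E * \int[mu]_h (\sum_(c <- ctxD) e c h)%:E <= eps%:E)%E ->
  ((1 / 5)%:E * \int[mu]_h (\sum_(c <- ctxD) \sum_(a : bool) J c a (~~ a) h)%:E
     <= (4 / 5 + eps)%:E)%E.
Proof.
move=> eps0 hp hq mp mq hJ he me hinc hint.
set c1 : 'I_5 * 'I_5 := (inord 0, inord 1).
set c2 : 'I_5 * 'I_5 := (inord 2, inord 1).
set c3 : 'I_5 * 'I_5 := (inord 2, inord 3).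
set c4 : 'I_5 * 'I_5 := (inord 4, inord 3).
set c5 : 'I_5 * 'I_5 := (inord 4, inord 0).
have sumD : forall (f : 'I_5 * 'I_5 -> R),
    \sum_(c <- ctxD) f c = f c1 + (f c2 + (f c3 + (f c4 + (f c5 + 0)))).
  by move=> f; rewrite /ctxD !big_cons big_nil.
have m1 : c1 \in ctxD by rewrite /ctxD !inE eqxx.
have m2 : c2 \in ctxD by rewrite /ctxD !inE eqxx ?orbT.
have m3 : c3 \in ctxD by rewrite /ctxD !inE eqxx ?orbT.
have m4 : c4 \in ctxD by rewrite /ctxD !inE eqxx ?orbT.
have m5 : c5 \in ctxD by rewrite /ctxD !inE eqxx ?orbT.
have win : forall c h, c \in ctxD -> \sum_(a : bool) J c a (~~ a) h =
    p c.1 h * (1 - q c h) + (1 - p c.1 h) * q c h.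
  by move=> c h mc; rewrite big_bool /= !hJ.
set S := fun h => \sum_(c <- ctxD) \sum_(a : bool) J c a (~~ a) h.
set E := fun h => \sum_(c <- ctxD) e c h.
have S0 : forall h, 0 <= S h.
  move=> h; rewrite /S big_seq; apply: sumr_ge0 => c mc.
  rewrite win //; have := hp c.1 h; have := hq c h mc.
  move=> /andP[? ?] /andP[? ?]; nra.
have E0 : forall h, 0 <= E h.
  move=> h; rewrite /E big_seq; apply: sumr_ge0 => c mc.
  by case/andP: (he c h mc).
have SE : forall h, S h <= 4 + E h.
  move=> h; rewrite /S /E !sumD !win //.
  have b := fun (c : 'I_5 * 'I_5) (mc : c \in ctxD) => @ctx_bound R _ _ _ _ (hp c.1 h) (hp c.2 h) (hq c h mc)
                                 (hinc c h true mc).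
  have := b c1 m1; have := b c2 m2; have := b c3 m3; have := b c4 m4; have := b c5 m5.
  have := @cyc_bound R _ _ _ _ _ (hp (inord 0) h) (hp (inord 1) h) (hp (inord 2) h)
                    (hp (inord 3) h) (hp (inord 4) h).
  rewrite /Fcyc /=; lra.
have mS : measurable_fun setT S.
  have -> : S = fun h => \sum_(c <- ctxD) (p c.1 h * (1 - q c h) + (1 - p c.1 h) * q c h).
    by apply/funext => h; rewrite /S big_seq [RHS]big_seq; apply: eq_bigr => c mc; rewrite win.
  have mt : forall c, c \in ctxD -> measurable_fun setT
      (fun h => p c.1 h * (1 - q c h) + (1 - p c.1 h) * q c h).
    move=> c mc; apply: measurable_funD; apply: measurable_funM => //;
      try apply: measurable_funB => //; exact: mq.
  have -> : (fun h => \sum_(c <- ctxD) (p c.1 h * (1 - q c h) + (1 - p c.1 h) * q c h)) =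
     (fun h => (p c1.1 h * (1 - q c1 h) + (1 - p c1.1 h) * q c1 h) +
     ((p c2.1 h * (1 - q c2 h) + (1 - p c2.1 h) * q c2 h) +
     ((p c3.1 h * (1 - q c3 h) + (1 - p c3.1 h) * q c3 h) +
     ((p c4.1 h * (1 - q c4 h) + (1 - p c4.1 h) * q c4 h) +
     ((p c5.1 h * (1 - q c5 h) + (1 - p c5.1 h) * q c5 h) + 0))))).
    by apply/funext => h; rewrite sumD.
  by do 5 (apply: measurable_funD; [by apply: mt|]); exact: measurable_cst.
have mE : measurable_fun setT E.
  have -> : E = fun h => e c1 h + (e c2 h + (e c3 h + (e c4 h + (e c5 h + 0)))).
    by apply/funext => h; rewrite /E sumD.
  by do 5 (apply: measurable_funD; [by apply: me|]); exact: measurable_cst.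
have le1 : (\int[mu]_h (S h)%:E <= \int[mu]_h ((4:R)%:E + (E h)%:E))%E.
  apply: ge0_le_integral => //.
  - by move=> h _; rewrite lee_fin.
  - by apply/measurable_EFinP.
  - by apply: emeasurable_funD => //; apply/measurable_EFinP.
  - by move=> h _; rewrite -EFinD lee_fin.
have eqI : (\int[mu]_h ((4:R)%:E + (E h)%:E) = \int[mu]_h (cst (4:R)%:E) h + \int[mu]_h (E h)%:E)%E.
  apply: ge0_integralD => //; (try by move=> h _; rewrite lee_fin); by apply/measurable_EFinP.
rewrite eqI in le1.
rewrite (integral_cst mu measurableT) in le1.
set M := (X in (_ <= _ * X + _)%E) in le1.
have mu1 : M = 1%E by rewrite /M; exact: probability_setT.
rewrite mu1 mule1 in le1.
have I0 : (0 <= \int[mu]_h (E h)%:E)%E by apply: integral_ge0 => h _; rewrite lee_fin.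
have hint' : ((1/5)%:E * \int[mu]_h (E h)%:E <= eps%:E)%E by [].
suff : ((1 / 5)%:E * \int[mu]_h (S h)%:E <= (4 / 5 + eps)%:E)%E by [].
have S0' : (0 <= \int[mu]_h (S h)%:E)%E by apply: integral_ge0 => h _; rewrite lee_fin.
move: le1 I0 hint' S0'.
case: (\int[mu]_h (E h)%:E)%E => [r| |] //; last by rewrite mulry gtr0_sg ?mul1e.
case: (\int[mu]_h (S h)%:E)%E => [s| |] //.
all: try by [].
rewrite -!EFinD -!EFinM !lee_fin => ? ? ? ?; lra.
Qed.
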